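(* There exists a constant $C>0$ such that for every sufficiently large $n$ and any two $n$-vertex $3$-uniform generalised hedgehogs $H,H'$ we have \[R(H,H')\le C n^{3/2}.\]
   Context: A $3$-graph is a $3$-uniform hypergraph. For $3$-graphs $G,H$, the ($2$-colour) Ramsey number $R(G,H)$ is the least $N$ such that every colouring of the edges of the complete $3$-graph on $N$ vertices with red and blue contains a blue copy of $G$ or a red copy of $H$. A (generalised) hedgehog is a $3$-graph on vertex set $B\sqcup S$ ($B$ the body, $S$ the spikes) in which every edge consists of one spike and two body vertices, and every spike lies in exactly one edge (different spikes may be attached to the same pair of body vertices, and some pairs of body vertices may have no spike). *)

(* Defs.v *)
From mathcomp Require Import all_boot.
From Stdlib Require Import Reals.

Set Implicit Arguments.
Unset Strict Implicit.
Unset Printing Implicit Defensive.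

Definition is_3graph (V : finType) (E : {set {set V}}) : Prop :=
  forall e, e \in E -> #|e| = 3.

(* A generalised hedgehog: a 3-graph whose vertex set splits into a body
   B = ~: S and spikes S, such that every edge contains exactly one spike
   (hence exactly two body vertices), and every spike lies in exactly one edge. *)
Definition is_hedgehog (V : finType) (E : {set {set V}}) : Prop :=
  is_3graph E /\
  exists S : {set V},
    (forall e, e \in E -> #|e :&: S| = 1) /\
    (forall s, s \in S -> #|[set e in E | s \in e]| = 1).

Definition has_copy (V : finType) (E : {set {set V}}) (N : nat)
  (P : {set 'I_N} -> bool) : Prop :=
  exists f : V -> 'I_N, injective f /\ forall e, e \in E -> P (f @: e).

(* Every red/blue colouring of the triples of 'I_N (colour c t = true means
   blue) contains a blue copy of G or a red copy of H. *)
Definition ramsey_arrows (N : nat) (V1 : finType) (G : {set {set V1}})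
  (V2 : finType) (H : {set {set V2}}) : Prop :=
  forall c : {set 'I_N} -> bool,
    has_copy G c \/ has_copy H (fun t => ~~ c t).

(* R(G,H) <= x  (R(G,H) is the least N with ramsey_arrows N G H; the least
   such N is <= x iff some N <= x has the property). *)
Definition ramsey_le (V1 : finType) (G : {set {set V1}})
  (V2 : finType) (H : {set {set V2}}) (x : R) : Prop :=
  exists N : nat, (INR N <= x)%R /\ ramsey_arrows N G H.

(* Main.v *)
Require Import Defs.
From mathcomp Require Import all_boot.
From Stdlib Require Import Reals.
From Stdlib Require Import Lia Lra.
From mathcomp Require Import zify.
Set Implicit Arguments. Unset Strict Implicit. Unset Printing Implicit Defensive.

Lemma card_bigcup_le (I T: finType) (A : {set I}) (F : I -> {set T}) :
  #|\bigcup_(i in A) F i| <= \sum_(i in A) #|F i|.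
Proof.
elim/big_rec2: _ => [|i B k _ IH]; first by rewrite cards0.
by rewrite cardsU (leq_trans (leq_subr _ _)) // leq_add2l.
Qed.

Lemma sum_bool_card (T : finType) (A : {set T}) (p : pred T) :
  \sum_(i in A) (p i : nat) = #|[set i in A | p i]|.
Proof.
rewrite -sum1_card big_mkcond [RHS]big_mkcond /=.
apply: eq_bigr => i _; rewrite inE; by case: (i \in A); case: (p i).
Qed.

Lemma double_count (V : finType) (E : {set {set V}}) (A : {set V}) :
  \sum_(e in E) #|e :&: A| = \sum_(a in A) #|[set e in E | a \in e]|.
Proof.
transitivity (\sum_(e in E) \sum_(a in A) (a \in e : nat)).
  apply: eq_bigr => e _; rewrite sum_bool_card; apply: eq_card => a; rewrite !inE andbC //.
rewrite exchange_big /=; apply: eq_bigr => a _; rewrite sum_bool_card; apply: eq_card => e; by rewrite !inE.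
Qed.
Section Col.
Variable N : nat.
Definition cod (P : {set 'I_N} -> bool) (x y : 'I_N) :=
  [set z | (z != x) && (z != y) && P [set x; y; z]].
Definition good P k x y := k <= #|cod P x y|.
Definition bad P k x := [set y | (y != x) && ~~ good P k x y].

Lemma set3C (T : finType) (x y z : T) : [set x; y; z] = [set y; x; z].
Proof. apply/setP => w; by rewrite !inE (orbC (w == x)). Qed.
Lemma set3C' (T : finType) (x y z : T) : [set x; y; z] = [set x; z; y].
Proof. apply/setP => w; by rewrite !inE -!orbA (orbC (w == y)). Qed.

Lemma codC P x y : cod P x y = cod P y x.
Proof. apply/setP => z; by rewrite !inE set3C (andbC (z != x)). Qed.
Lemma goodC P k x y : good P k x y = good P k y x.
Proof. by rewrite /good codC. Qed.

Lemma classify (c : {set 'I_N} -> bool) k x : 0 < k ->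
  (#|bad c k x| <= 2 * k) \/ (#|bad (fun t => ~~ c t) k x| <= 2 * k).
Proof.
move=> k0; set Bb := bad c k x; set Br := bad (fun t => ~~ c t) k x.
have h1 : \sum_(y in Bb) \sum_(y' in Br) ((y' != y) && c [set x; y; y'] : nat) <= #|Bb| * k.-1.
  rewrite -sum_nat_const; apply: leq_sum => y; rewrite inE => /andP[yx].
  rewrite /good -ltnNge => hy; rewrite sum_bool_card.
  have: #|[set i in Br | (i != y) && c [set x; y; i]]| <= #|cod c x y|.
    apply: subset_leq_card; apply/subsetP => z; rewrite !inE => /and3P[/andP[zx _] zy cz].
    by rewrite zx zy cz.
  lia.
have h2 : \sum_(y in Bb) \sum_(y' in Br) ((y' != y) && ~~ c [set x; y; y'] : nat) <= #|Br| * k.-1.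
  rewrite exchange_big /= -sum_nat_const; apply: leq_sum => y; rewrite inE => /andP[yx].
  rewrite /good -ltnNge => hy; rewrite sum_bool_card.
  have: #|[set i in Bb | (y != i) && ~~ c [set x; i; y]]| <= #|cod (fun t => ~~ c t) x y|.
    apply: subset_leq_card; apply/subsetP => z; rewrite !inE => /and3P[/andP[zx _] zy cz].
    by rewrite zx eq_sym zy set3C'.
  move=> h; have hh := leq_ltn_trans h hy; rewrite -ltnS (ltn_predK (leq_ltn_trans (leq0n _) hh)) //.
have h3 : #|Bb| * (#|Br| - 1) <= \sum_(y in Bb) \sum_(y' in Br) ((y' != y) : nat).
  rewrite -sum_nat_const; apply: leq_sum => y _; rewrite sum_bool_card.
  have := cardsD1 y Br.
  have -> : Br :\ y = [set i in Br | i != y].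
    by apply/setP => i; rewrite !inE andbC.
  case: (y \in Br) => /=; lia.
have h4 : \sum_(y in Bb) \sum_(y' in Br) ((y' != y) : nat) =
   \sum_(y in Bb) \sum_(y' in Br) ((y' != y) && c [set x; y; y'] : nat) +
   \sum_(y in Bb) \sum_(y' in Br) ((y' != y) && ~~ c [set x; y; y'] : nat).
  rewrite -big_split /=; apply: eq_bigr => y _; rewrite -big_split /=; apply: eq_bigr => y' _.
  by case: (y' != y); case: (c _).
case: (leqP #|Bb| (2 * k)) => hb; [by left|]; right.
case: (leqP #|Br| (2 * k)) => hr //.
exfalso. clearbody Bb Br. move: h1 h2 h3 h4 hb hr. case: k k0 => // k _ /=.
move: #|Bb| #|Br| => a b. case: b => // b. rewrite subn1 /=. nia.
Qed.
End Col.
Lemma sum_sub_le (I : finType) (A B : {set I}) (F : I -> nat) :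
  A \subset B -> \sum_(i in A) F i <= \sum_(i in B) F i.
Proof.
move=> /subsetP AB; rewrite big_mkcond [X in _ <= X]big_mkcond /=; apply: leq_sum => i _.
by case: (boolP (i \in A)) => // /AB ->.
Qed.

Section Hog.
Variables (V : finType) (E : {set {set V}}) (S : {set V}).
Hypothesis HE3 : forall e, e \in E -> #|e| = 3.
Hypothesis HES : forall e, e \in E -> #|e :&: S| = 1.
Hypothesis HSE : forall s, s \in S -> #|[set e in E | s \in e]| = 1.

Lemma cardD2 e : e \in E -> #|e :\: S| = 2.
Proof. move=> eE; have := cardsID S e; rewrite (HES eE) (HE3 eE). lia. Qed.

Lemma decomp e : e \in E -> exists u v s,
  [/\ u != v, u \notin S, v \notin S, s \in S & e = [set u; v; s]].
Proof.
move=> eE; have /cards1P [s hs] : #|e :&: S| == 1 by rewrite HES.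
have /cards2P [u [v [uv huv]]] : #|e :\: S| == 2 by rewrite cardD2.
have uD : u \in e :\: S by rewrite huv !inE eqxx.
have vD : v \in e :\: S by rewrite huv !inE eqxx orbT.
have sI : s \in e :&: S by rewrite hs inE.
move: (uD) (vD) (sI); rewrite !inE => /andP[uS _] /andP[vS _] /andP[_ sS].
exists u, v, s; split => //.
rewrite -(setID e S) hs huv; apply/setP => w; rewrite !inE.
by case: (w == s); case: (w == u); case: (w == v).
Qed.

Lemma spike_uniq e x y : e \in E -> x \in e -> y \in e -> x \in S -> y \in S -> x = y.
Proof.
move=> eE xe ye xS yS; have /cards1P [t ht] : #|e :&: S| == 1 by rewrite HES.
have : x \in e :&: S by rewrite inE xe.
have : y \in e :&: S by rewrite inE ye.
by rewrite ht !inE => /eqP-> /eqP->.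
Qed.

Lemma edge_of s : s \in S -> exists e, [/\ e \in E, s \in e &
   forall e', e' \in E -> s \in e' -> e' = e].
Proof.
move=> sS; have /cards1P [e he] : #|[set e in E | s \in e]| == 1 by rewrite HSE.
have : e \in [set e in E | s \in e] by rewrite he inE.
rewrite inE => /andP[eE se]; exists e; split => // e' e'E se'.
have : e' \in [set e in E | s \in e] by rewrite inE e'E se'.
by rewrite he inE => /eqP.
Qed.

Definition adj (u v : V) := (u != v) && [exists e in E, (u \in e) && (v \in e)].

Lemma adjC u v : adj u v = adj v u.
Proof.
rewrite /adj eq_sym; congr (_ && _).
by apply/existsP/existsP => -[e /andP[eE /andP[h1 h2]]]; exists e; rewrite eE h1 h2.
Qed.

Lemma adj_deg v : v \notin S ->
  #|[set u in ~: S | adj u v]| <= #|[set e in E | v \in e]|.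
Proof.
move=> vS.
pose g u := odflt set0 [pick e in E | (u \in e) && (v \in e)].
have gP u : adj u v -> [/\ g u \in E, u \in g u & v \in g u].
  case/andP => _ /existsP [e0 he0]; rewrite /g.
  case: pickP => [e /andP[eE /andP[ue ve]] | /(_ e0)]; first by [].
  by rewrite he0.
rewrite -(card_in_imset (f := g)).
  apply: subset_leq_card; apply/subsetP => e /imsetP [u]; rewrite inE => /andP[_ uv] ->.
  by have [? ? ?] := gP u uv; rewrite inE; apply/andP.
move=> u1 u2; rewrite !inE => /andP[u1S a1] /andP[u2S a2] geq.
have [eE u1e ve] := gP u1 a1; have [_ u2e _] := gP u2 a2; rewrite -geq in u2e.
move: eE u1e ve u2e; set e := g u1 => eE u1e ve u2e.
have := cardD2 eE; move/eqP/cards2P => [a [b [ab hab]]].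
have : u1 \in e :\: S by rewrite inE u1e andbT.
have : u2 \in e :\: S by rewrite inE u2e andbT.
have : v \in e :\: S by rewrite inE ve andbT.
move: a1 a2; rewrite /adj => /andP[n1 _] /andP[n2 _].
rewrite hab !inE.
move=> /orP[/eqP|/eqP] h0 /orP[/eqP|/eqP] h2 /orP[/eqP|/eqP] h1; subst;
  by rewrite ?eqxx in n1 n2 ab *.
Qed.

Lemma cardE_S : #|E| = #|S|.
Proof.
have := double_count E S.
rewrite (eq_bigr (fun _ => 1)); last by move=> e eE; rewrite HES.
rewrite (eq_bigr (fun _ => 1) (P := fun a => a \in S)); last by move=> s sS; rewrite HSE.
by rewrite !sum1_card.
Qed.

Lemma sum_deg : \sum_(v in ~: S) #|[set e in E | v \in e]| = 2 * #|S|.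
Proof.
rewrite -double_count (eq_bigr (fun _ => 2)); last by move=> e eE; rewrite -setDE cardD2.
by rewrite sum_nat_const cardE_S mulnC.
Qed.

Lemma degenerate d : 2 * #|S| < d.+1 * d.+2 ->
  forall W : {set V}, W \subset ~: S -> W != set0 ->
  exists2 v, v \in W & #|[set u in W | adj u v]| <= d.
Proof.
move=> hd W WS Wn0.
case: (boolP [exists v in W, #|[set u in W | adj u v]| <= d]).
  by move/existsP => [v /andP[vW hv]]; exists v.
move=> H.
have Hv : forall v, v \in W -> d < #|[set u in W | adj u v]|.
  move=> v vW; rewrite ltnNge; apply/negP => hle; move/negP: H; apply.
  by apply/existsP; exists v; rewrite vW hle.
have [v0 v0W] := set0Pn _ Wn0.
have hW : d.+2 <= #|W|.
  have := Hv v0 v0W.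
  have : [set u in W | adj u v0] \subset W :\ v0.
    apply/subsetP => u; rewrite !inE => /andP[uW /andP[uv _]]; by rewrite uW uv.
  move/subset_leq_card; have := cardsD1 v0 W; rewrite v0W; lia.
have h1 : #|W| * d.+1 <= \sum_(v in W) #|[set u in W | adj u v]|.
  rewrite -sum_nat_const; apply: leq_sum => v vW; exact: Hv.
have h2 : \sum_(v in W) #|[set u in W | adj u v]| <= 2 * #|S|.
  rewrite -sum_deg (leq_trans _ (sum_sub_le _ WS)) //; apply: leq_sum => v vW.
  have vS : v \notin S by move/subsetP: WS => /(_ v vW); rewrite inE.
  apply: leq_trans (adj_deg vS); apply: subset_leq_card; apply/subsetP => u.
  rewrite !inE => /andP[uW ->]; rewrite andbT.
  by move/subsetP: WS => /(_ u uW); rewrite inE.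
have := leq_mul hW (leqnn d.+1). lia.
Qed.

End Hog.
Section Emb.
Variables (V : finType) (E : {set {set V}}) (S : {set V}).
Hypothesis HE3 : forall e, e \in E -> #|e| = 3.
Hypothesis HES : forall e, e \in E -> #|e :&: S| = 1.
Hypothesis HSE : forall s, s \in S -> #|[set e in E | s \in e]| = 1.
Variables (N k D d : nat) (P : {set 'I_N} -> bool) (X : {set 'I_N}).
Hypothesis hX : forall x, x \in X -> #|bad P k x| <= D.
Hypothesis hsz : #|V| + d * D < #|X|.
Hypothesis hd : 2 * #|S| < d.+1 * d.+2.
Hypothesis hk : #|V| <= k.

Lemma body_emb (W : {set V}) : W \subset ~: S -> exists f : V -> 'I_N,
  [/\ {in W &, injective f}, {in W, forall u, f u \in X} &
      {in W &, forall u v, adj E u v -> good P k (f u) (f v)}].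
Proof.
have [x0 x0X] : exists x, x \in X.
  apply/set0Pn; apply/negP => /eqP X0; move: hsz; rewrite X0 cards0; lia.
elim: {W}_.+1 {-2}W (ltnSn #|W|) => // m IH W lt WS.
case: (eqVneq W set0) => [->|Wn0].
  by exists (fun _ => x0); split => // u; rewrite inE.
have [v vW hv] := degenerate HE3 HES HSE hd WS Wn0.
set W' := W :\ v.
have W'W : W' \subset W by apply: subD1set.
have [f [finj fX fgood]] : exists f : V -> 'I_N,
  [/\ {in W' &, injective f}, {in W', forall u, f u \in X} &
      {in W' &, forall u v, adj E u v -> good P k (f u) (f v)}].
  apply: IH; last exact: subset_trans W'W WS.
  by have := cardsD1 v W; rewrite vW -/W'; lia.
set Nb := [set u in W | adj E u v].
set F := f @: W' :|: \bigcup_(u in Nb) bad P k (f u).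
have NbW' : Nb \subset W'.
  apply/subsetP => u; rewrite !inE => /andP[uW /andP[uv _]]; by rewrite uv.
have hF : #|F| < #|X|.
  apply: leq_ltn_trans hsz; apply: leq_trans (leq_card_setU _ _) _.
  apply: leq_add; first by apply: leq_trans (leq_imset_card _ _) (max_card _).
  apply: leq_trans (card_bigcup_le _ _) _.
  have hs : \sum_(u in Nb) #|bad P k (f u)| <= \sum_(u in Nb) D.
    by apply: leq_sum => u uNb; apply: hX; apply: fX; exact: (subsetP NbW' u uNb).
  apply: leq_trans hs _.
  rewrite sum_nat_const; exact: leq_mul hv (leqnn _).
have [w wX wF] : exists2 w, w \in X & w \notin F.
  apply/subsetPn; apply/negP => /subset_leq_card H.
  by rewrite leqNgt hF in H.
exists (fun x => if x == v then w else f x); split.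
- move=> x y xW yW /=.
  case: (eqVneq x v) => [->|xv]; case: (eqVneq y v) => [->|yv] //.
  + move=> wfy; exfalso; move: wF; rewrite !inE wfy; apply/negP; rewrite negbK.
    by apply/orP; left; apply: imset_f; rewrite !inE yv.
  + move=> fxw; exfalso; move: wF; rewrite !inE -fxw; apply/negP; rewrite negbK.
    by apply/orP; left; apply: imset_f; rewrite !inE xv.
  + by apply: finj; rewrite !inE ?xv ?yv.
- move=> u uW /=; case: eqP => [//|/eqP uv]; apply: fX; by rewrite !inE uv uW.
- have key : forall u, u \in W -> u != v -> adj E u v -> good P k (f u) w.
    move=> u uW uv auv.
    have uNb : u \in Nb by rewrite inE uW auv.
    have : w \notin bad P k (f u).
      apply: contra wF => wb; rewrite inE; apply/orP; right.
      by apply/bigcupP; exists u.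
    have : w != f u.
      apply: contra wF => /eqP->; rewrite inE; apply/orP; left.
      by apply: imset_f; rewrite !inE uv.
    by rewrite inE => -> /=; rewrite negbK goodC.
  move=> x y xW yW axy /=.
  case: (eqVneq x v) => [xv|xv]; case: (eqVneq y v) => [yv|yv].
  + by move: axy; rewrite xv yv /adj eqxx.
  + rewrite goodC; apply: key => //; by rewrite -xv adjC.
  + apply: key => //; by rewrite -yv.
  + by apply: fgood; rewrite // !inE ?xv ?yv.
Qed.

Lemma spike_emb (f : V -> 'I_N) :
  {in ~: S &, injective f} ->
  {in ~: S &, forall u v, adj E u v -> good P k (f u) (f v)} ->
  forall U : {set V}, U \subset S -> exists g : V -> 'I_N,
  [/\ {in ~: S, g =1 f}, {in ~: S :|: U &, injective g} &
      forall e, e \in E -> forall s, s \in U -> s \in e -> P (g @: e)].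
Proof.
move=> finj fgood U.
elim: {U}_.+1 {-2}U (ltnSn #|U|) => // m IH U lt US.
case: (eqVneq U set0) => [->|Un0].
  exists f; split => //.
    by move=> x y; rewrite setU0; apply: finj.
  by move=> e _ s; rewrite inE.
have [s sU] := set0Pn _ Un0.
have sS : s \in S := subsetP US s sU.
set U' := U :\ s.
have [g [gf ginj gP]] : exists g : V -> 'I_N,
  [/\ {in ~: S, g =1 f}, {in ~: S :|: U' &, injective g} &
      forall e, e \in E -> forall s, s \in U' -> s \in e -> P (g @: e)].
  apply: IH; last exact: subset_trans (subD1set U s) US.
  by have := cardsD1 s U; rewrite sU -/U'; lia.
have [e [eE se euniq]] := edge_of HSE sS.
have [a [b [t [ab aS bS tS edef]]]] := decomp HE3 HES eE.
have st : s = t by apply: (spike_uniq HES eE) => //; rewrite edef !inE eqxx !orbT.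
subst t.
have aab : adj E a b.
  rewrite /adj ab /=; apply/existsP; exists e; by rewrite eE edef !inE !eqxx ?orbT.
have gab : good P k (g a) (g b).
  rewrite !gf ?inE //; apply: fgood; by rewrite ?inE.
set Used := g @: (~: S :|: U').
have hU : #|Used| < #|cod P (g a) (g b)|.
  apply: leq_ltn_trans (leq_imset_card _ _) _.
  apply: (@leq_trans #|V|); last exact: leq_trans hk gab.
  have := cardsC (~: S :|: U').
  have : 0 < #|~: (~: S :|: U')|.
    by apply/card_gt0P; exists s; rewrite !inE sS /= eqxx.
  lia.
have [z zc zU] : exists2 z, z \in cod P (g a) (g b) & z \notin Used.
  apply/subsetPn; apply/negP => /subset_leq_card H.
  by rewrite leqNgt hU in H.
have sa : a != s by apply: contra aS => /eqP->.
have sb : b != s by apply: contra bS => /eqP->.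
exists (fun x => if x == s then z else g x); split.
- move=> x xS /=; have : x != s by apply: contraTneq xS => ->; rewrite inE negbK.
  by move/negbTE => ->; apply: gf.
- have hU' : forall x, x \in ~: S :|: U -> x != s -> x \in ~: S :|: U'.
    move=> x; rewrite !inE => /orP[->//|xU] xs; by rewrite xs xU orbT.
  move=> x y xU yU /=.
  case: (eqVneq x s) => [->|xs]; case: (eqVneq y s) => [->|ys] //.
  + move=> zgy; exfalso; move/negP: zU; apply; rewrite zgy; apply: imset_f; exact: hU'.
  + move=> gxz; exfalso; move/negP: zU; apply; rewrite -gxz; apply: imset_f; exact: hU'.
  + by apply: ginj; apply: hU'.
- move=> e' e'E s' s'U s'e'.
  case: (eqVneq s' s) => [s's|s's].
  + subst s'; rewrite (euniq e' e'E s'e') edef imsetU imsetU1 !imset_set1 eqxx.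
    rewrite (negbTE sa) (negbTE sb).
    by move: zc; rewrite inE => /andP[_].
  + have s'U' : s' \in U' by rewrite !inE s's.
    have sne : s \notin e'.
      apply/negP => se'; move/eqP: s's; apply; apply: (spike_uniq HES e'E) => //.
      exact: subsetP US s' s'U.
    rewrite (@eq_in_imset _ _ _ g); first exact: gP s'U' s'e'.
    move=> x xe /=; case: eqP => // xs; by move: sne; rewrite -xs xe.
Qed.
End Emb.

Lemma hog_copy (V : finType) (E : {set {set V}}) (N k D d : nat)
  (P : {set 'I_N} -> bool) (X : {set 'I_N}) :
  is_hedgehog E -> #|V| <= k -> (forall x, x \in X -> #|bad P k x| <= D) ->
  #|V| + d * D < #|X| -> 2 * #|V| < d.+1 * d.+2 -> has_copy E P.
Proof.
move=> [H3 [S [HES HSE]]] hk hX hsz hd.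
have hd' : 2 * #|S| < d.+1 * d.+2 by apply: leq_ltn_trans hd; rewrite leq_mul2l max_card orbT.
have [f [finj _ fgood]] := body_emb H3 HES HSE hX hsz hd' hk (subxx (~: S)).
have [g [_ ginj gP]] := spike_emb H3 HES HSE hsz hd' hk finj fgood (subxx S).
exists g; split.
  move=> x y gxy; apply: ginj => //; rewrite !inE; by case: (_ \in S).
move=> e eE; have /cards1P [s hs] : #|e :&: S| == 1 by rewrite HES.
have : s \in e :&: S by rewrite hs inE.
rewrite inE => /andP[se sS]; exact: gP eE s sS se.
Qed.

Lemma real_bound (n d : nat) : (1 <= n)%N -> (d * d <= 2 * n)%N ->
  (INR (2 * (n + d * (2 * n) + 1)) <= 10 * Rpower (INR n) (3 / 2))%R.
Proof.
move=> n1 dd.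
have -> : (3 / 2 = 1 + / 2)%R by field.
have n0 : (0 < INR n)%R by apply: lt_0_INR; apply/leP; lia.
have n1' : (1 <= INR n)%R by apply: (le_INR 1); apply/leP; lia.
rewrite Rpower_plus Rpower_1 // Rpower_sqrt //.
have hs := sqrt_sqrt (INR n) (Rlt_le _ _ n0).
have s1 : (1 <= sqrt (INR n))%R by rewrite -sqrt_1; apply: sqrt_le_1_alt.
have hdd : (INR d * INR d <= 2 * INR n)%R.
  rewrite -mult_INR; have -> : (2 * INR n = INR (2 * n))%R by rewrite mult_INR.
  apply: le_INR; apply/leP; exact: dd.
have d0 : (0 <= INR d)%R by apply: pos_INR.
set s := sqrt (INR n) in hs s1 *.
have hr : (INR d <= 3 / 2 * s)%R by nra.
have -> : INR (2 * (n + d * (2 * n) + 1)) = (2 * INR n + 4 * INR n * INR d + 2)%R.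
  rewrite !mult_INR !plus_INR !mult_INR /=; ring.
nra.
Qed.

Theorem theorem1p2 :
  exists C : R, (0 < C)%R /\
  exists n0 : nat, forall n : nat, (n0 <= n)%N ->
  forall (V1 V2 : finType) (H : {set {set V1}}) (H' : {set {set V2}}),
    #|V1| = n -> #|V2| = n -> is_hedgehog H -> is_hedgehog H' ->
    ramsey_le H H' (C * Rpower (INR n) (3 / 2))%R.
Proof.
exists 10%R; split; first lra.
exists 1%N => n n1 V1 V2 H H' hV1 hV2 hH hH'.
set d := Nat.sqrt (2 * n).
have [dd1 dd2] := Nat.sqrt_spec (2 * n) (Nat.le_0_l _).
have dd : (d * d <= 2 * n)%N by apply/leP.
have hd : (2 * n < d.+1 * d.+2)%N.
  have : (2 * n < d.+1 * d.+1)%N by apply/ltP.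
  move=> h; apply: leq_trans h _; rewrite leq_mul2l; by rewrite ltnW ?orbT.
set K := (n + d * (2 * n) + 1)%N.
exists (2 * K)%N; split; first exact: real_bound.
move=> c.
set BT := [set x : 'I_(2 * K) | #|bad c n x| <= 2 * n].
set RT := [set x : 'I_(2 * K) | #|bad (fun t => ~~ c t) n x| <= 2 * n].
have hall : BT :|: RT = setT.
  apply/setP => x; rewrite !inE.
  by case: (classify c x (n1 : (0 < n)%N)) => ->; rewrite ?orbT.
have hsum : (2 * K <= #|BT| + #|RT|)%N.
  have := cardsU BT RT; rewrite hall cardsT card_ord; lia.
case: (leqP K #|BT|) => hB.
  left; apply: (@hog_copy _ _ _ n (2 * n) d c BT) => //.
  - by rewrite hV1.
  - by move=> x; rewrite inE.
  - by rewrite hV1; apply: leq_trans hB; rewrite /K addn1.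
  - by rewrite hV1.
right; apply: (@hog_copy _ _ _ n (2 * n) d (fun t => ~~ c t) RT) => //.
- by rewrite hV2.
- by move=> x; rewrite inE.
- rewrite hV2; move: hB hsum; move: #|BT| #|RT| => a b; rewrite /K; move: (n + d * (2 * n)) => M; lia.
- by rewrite hV2.
Qed.
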